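(* Let $\mathbb F$ be a field, let $A\subset\mathbb F$ be a finite set, let $n\le |A|$, and let $a_1,\dots,a_n\in\mathbb F\setminus\{0\}$ (not necessarily distinct). Let $n_1,\dots,n_t$ be the multiplicities of the distinct values occurring among $a_1,\dots,a_n$ (so $\sum_{i=1}^t n_i=n$), and put $$d:=n\big(|A|-n\big)+\sum_{1\le i<j\le t}n_in_j .$$ If $\mathbb F$ has characteristic $0$ or characteristic $p>d$, then $$\Big|\Big\{\sum_{i=1}^n a_ix_i \;:\; x_1,\dots,x_n\in A,\ x_i\ne x_j \text{ for } i\ne j\Big\}\Big|\ \ge\ d+1 .$$ *)

(* Defs.v *)
From HB Require Import structures.
From mathcomp Require Import all_boot all_order all_algebra.
Set Implicit Arguments. Unset Strict Implicit. Unset Printing Implicit Defensive.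
Import Order.TTheory GRing.Theory Num.Theory.

Definition mults (T : eqType) (s : seq T) : seq nat :=
  [seq count (pred1 v) s | v <- undup s].

Definition pair_prod_sum (m : seq nat) : nat :=
  (\sum_(i < size m) \sum_(j < size m | (i < j)%N) nth 0 m i * nth 0 m j)%N.

Definition dparam (F : fieldType) (n : nat) (A : seq F) (a : 'I_n -> F) : nat :=
  (n * (size A - n) + pair_prod_sum (mults [seq a i | i <- enum 'I_n]))%N.

Definition restricted_sum (F : fieldType) (n : nat) (A : seq F) (a : 'I_n -> F)
    (y : F) : Prop :=
  exists x : 'I_n -> F,
    (forall i, x i \in A) /\ injective x /\ y = (\sum_(i < n) a i * x i)%R.

(* Main.v *)
Require Import Defs.
From HB Require Import structures.
From mathcomp Require Import all_boot all_order all_algebra.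
Import Order.TTheory GRing.Theory Num.Theory.
From mathcomp Require Import zify ring.
From mathcomp Require Import fingroup perm.
From mathcomp.multinomials Require Import mpoly.

Set Implicit Arguments. Unset Strict Implicit. Unset Printing Implicit Defensive.

(* combinatorial Nullstellensatz-style proof. *)

Section CombPart.
Lemma sumn_ord m : sumn m = \sum_(i < size m) nth 0 m i.
Proof. by rewrite sumnE (big_nth 0) big_mkord. Qed.

Lemma pp_cons x m : pair_prod_sum (x :: m) = pair_prod_sum m + x * sumn m.
Proof.
rewrite /pair_prod_sum /= (big_ord_recl (size m)) addnC; congr (_ + _).
  apply: eq_bigr => i _; rewrite big_mkcond (big_ord_recl (size m)) /= add0n.
  by rewrite [RHS]big_mkcond; apply: eq_bigr => j _.
rewrite big_mkcond (big_ord_recl (size m)) /= add0n sumn_ord big_distrr /=.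
by apply: eq_bigr.
Qed.

Lemma pp_sq m : 2 * pair_prod_sum m + \sum_(i < size m) (nth 0 m i) ^ 2 = (sumn m) ^ 2.
Proof.
elim: m => [|x m IH]; first by rewrite /pair_prod_sum !big_ord0.
rewrite pp_cons /= (big_ord_recl (size m)) /=.
have -> : \sum_(i < size m) nth 0 (x :: m) (lift ord0 i) ^ 2 = \sum_(i < size m) nth 0 m i ^ 2.
  by apply: eq_bigr.
nia.
Qed.

Lemma sum_undup_count (T : eqType) (s : seq T) (f : T -> nat) :
  \sum_(u <- undup s) count (pred1 u) s * f u = \sum_(x <- s) f x.
Proof.
elim: s => [|v s IH]; first by rewrite !big_nil.
rewrite big_cons /=.
have E : \sum_(u <- undup s) count (pred1 u) (v :: s) * f u =
         \sum_(u <- undup s) count (pred1 u) s * f u + \sum_(u <- undup s) ((v == u) * f u).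
  by rewrite -big_split /=; apply: eq_bigr => u _; rewrite /= mulnDl addnC.
case: ifP => hv.
  rewrite E IH addnC; congr (_ + _).
  rewrite (bigD1_seq v) ?undup_uniq ?mem_undup //= eqxx mul1n big1 ?addn0 //.
  by move=> u /negbTE; rewrite eq_sym => ->.
rewrite big_cons /= eqxx E IH.
have -> : \sum_(u <- undup s) (v == u) * f u = 0.
  apply: big1_seq => u; rewrite mem_undup => /andP [_ hu].
  by case: eqP => // e; rewrite e hu in hv.
have -> : count (pred1 v) s = 0 by apply/eqP; rewrite -leqn0 leqNgt -has_count has_pred1 hv.
rewrite /=; lia.
Qed.

Definition rank (T : eqType) (x0 : T) (s : seq T) (i : nat) :=
  count (pred1 (nth x0 s i)) (drop i.+1 s).

Lemma sum_rank (T : eqType) (x0 : T) (s : seq T) :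
  2 * (\sum_(i < size s) rank x0 s i) + size s = \sum_(x <- s) count (pred1 x) s.
Proof.
elim: s => [|v s IH]; first by rewrite big_ord0 big_nil.
rewrite /= (big_ord_recl (size s)) big_cons /=.
have -> : \sum_(i < size s) rank x0 (v :: s) (lift ord0 i) = \sum_(i < size s) rank x0 s i.
  by apply: eq_bigr.
rewrite /rank /= drop0 eqxx.
have -> : \sum_(j <- s) count (pred1 j) (v :: s) = \sum_(j <- s) count (pred1 j) s + count (pred1 v) s.
  rewrite /= big_split /= addnC; congr (_ + _).
  rewrite -sum1_count [RHS]big_mkcond; apply: eq_bigr => j _ /=; rewrite eq_sym; by case: eqP.
move: IH; rewrite /rank /=; lia.
Qed.

Lemma sumn_mults (T : eqType) (s : seq T) : sumn (mults s) = size s.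
Proof.
have := sum_undup_count s (fun _ => 1); rewrite sum1_size => <-.
by rewrite /mults sumnE big_map; apply: eq_bigr => u _; rewrite muln1.
Qed.

Lemma pp_rank (T : eqType) (x0 : T) (s : seq T) :
  2 * pair_prod_sum (mults s) + 2 * (\sum_(i < size s) rank x0 s i) + size s = size s ^ 2.
Proof.
rewrite -addnA sum_rank -(sumn_mults s) -pp_sq; congr (_ + _).
rewrite -(sum_undup_count s (fun x => count (pred1 x) s)).
rewrite -(big_mkord xpredT (fun i => nth 0 (mults s) i ^ 2)) -(big_nth 0 xpredT (fun i => i ^ 2)).
by rewrite /mults big_map; apply: eq_bigr => u _; rewrite mulnn.
Qed.

Lemma rank_exists (T : eqType) (x0 : T) (s : seq T) (al : T) (r : nat) :
  r < count (pred1 al) s -> exists i, [/\ i < size s, nth x0 s i = al & rank x0 s i = r].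
Proof.
elim: s r => [|v s IH] r //=.
case: (eqVneq v al) => [->|hv] /=.
  rewrite add1n ltnS leq_eqVlt => /orP [/eqP ->|/IH [i [h1 h2 h3]]].
    by exists 0; rewrite /rank /= drop0.
  by exists i.+1; split => //; rewrite /rank /=.
rewrite add0n => /IH [i [h1 h2 h3]].
by exists i.+1.
Qed.

Lemma rank_lt (T : eqType) (x0 : T) (s : seq T) i : i < size s -> rank x0 s i < size s.
Proof.
move=> hi; rewrite /rank (leq_ltn_trans (count_size _ _)) // size_drop; lia.
Qed.

Lemma pp_ge (T : eqType) (s : seq T) :
  pair_prod_sum (mults s) = 0 \/ size s - 1 <= pair_prod_sum (mults s).
Proof.
have hs := sumn_mults s.
rewrite /mults in hs *.
case E: (undup s) hs => [|u [|v w]] /=.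
- by left; rewrite /pair_prod_sum big_ord0.
- by move=> _; left; rewrite pp_cons /pair_prod_sum big_ord0 /= muln0.
move=> hs; right; rewrite pp_cons.
have hu : 0 < count (pred1 u) s.
  by rewrite -has_count has_pred1 -mem_undup E mem_head.
have hv : 0 < count (pred1 v) s.
  by rewrite -has_count has_pred1 -mem_undup E !inE eqxx orbT.
move: hs; rewrite /=; set S := sumn _ => hs.
nia.
Qed.

End CombPart.

Section PolyPart.
Local Open Scope ring_scope.
Lemma comp_Xn (F : fieldType) (m : nat) (r : {poly F}) : 'X^m \Po r = r ^+ m.
Proof.
elim: m => [|m IH]; first by rewrite !expr0 comp_polyC.
by rewrite !exprS comp_polyM comp_polyX IH.
Qed.

Lemma taylor_dvd (F : fieldType) (q : {poly F}) (x : F) (m : nat) :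
  (forall r, (r < m)%N -> (q \Po ('X + x%:P))`_r = 0) -> ('X - x%:P) ^+ m %| q.
Proof.
move=> h; set q' := q \Po ('X + x%:P).
have e : take_poly m q' = 0.
  by apply/polyP => i; rewrite coef_take_poly coef0; case: ifP => // /h.
have hq' : 'X^m %| q' by rewrite -(poly_take_drop m q') e add0r dvdp_mull.
have := dvdp_comp_poly ('X - x%:P) hq'.
by rewrite comp_polyXaddC_K comp_Xn.
Qed.

Lemma dvd_prod_roots (F : fieldType) (q : {poly F}) (l : seq F) (k : F -> nat) :
  uniq l -> (forall x, x \in l -> ('X - x%:P) ^+ k x %| q) ->
  (\prod_(x <- l) ('X - x%:P) ^+ k x %| q) /\
  size (\prod_(x <- l) ('X - x%:P) ^+ k x) = (\sum_(x <- l) k x).+1.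
Proof.
elim: l => [|x l IH] /=; first by rewrite !big_nil dvd1p size_poly1.
move=> /andP [hx hl] h.
have [h1 h2] := IH hl (fun y hy => h y (@mem_behead _ (x :: l) _ hy)).
have hmon : \prod_(y <- l) ('X - y%:P) ^+ k y \is monic.
  by apply: monic_prod => y _; apply: monic_exp; apply: monicXsubC.
rewrite !big_cons; split.
  rewrite Gauss_dvdp ?h ?mem_head //.
  apply: coprimep_expl; rewrite coprimep_sym coprimep_XsubC.
  rewrite /root horner_prod prodf_seq_neq0; apply/allP => y hy /=.
  rewrite horner_exp hornerXsubC expf_neq0 // subr_eq0.
  by apply/eqP => e; move: hx; rewrite e hy.
rewrite size_monicM ?monic_exp ?monicXsubC //; last by apply: monic_neq0.
by rewrite size_exp_XsubC h2 addSn addnS.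
Qed.

Lemma coef_XaddC_exp (F : fieldType) (x : F) e r :
  (('X + x%:P) ^+ e)`_r = 'C(e, r)%:R * x ^+ (e - r).
Proof.
rewrite addrC exprDn coef_sum.
under eq_bigr => i _ do rewrite coefMn -polyC_exp coefCM coefXn.
case: (ltnP r e.+1) => hr.
  rewrite (bigD1 (Ordinal hr)) //= eqxx mulr1 big1 ?addr0 ?mulr_natl //.
  move=> i hi; have : r != i by apply: contra hi => /eqP e'; apply/eqP/val_inj.
  by move/negbTE => ->; rewrite mulr0 mul0rn.
rewrite bin_small // mul0r big1 // => i _.
have : r != i by apply/eqP => e'; move: (ltn_ord i); rewrite -e'; lia.
by move/negbTE => ->; rewrite mulr0 mul0rn.
Qed.

Lemma binom_swap N j r : (j + r <= N)%N -> ('C(N, j) * 'C(N - j, r) = 'C(N, r) * 'C(N - r, j))%N.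
Proof.
move=> h.
have p : (0 < j`! * r`! * (N - j - r)`!)%N by rewrite !muln_gt0 !fact_gt0.
apply/eqP; rewrite -(eqn_pmul2r p); apply/eqP.
have e1 := bin_fact (_ : j <= N)%N; have e2 := bin_fact (_ : r <= N - j)%N.
have e3 := bin_fact (_ : r <= N)%N; have e4 := bin_fact (_ : j <= N - r)%N.
have E : (N - r - j = N - j - r)%N by lia.
transitivity ('C(N, j) * j`! * ('C(N - j, r) * (r`! * (N - j - r)`!)))%N; first by ring.
rewrite e2; last by lia.
rewrite -mulnA e1; last by lia.
transitivity ('C(N, r) * r`! * ('C(N - r, j) * (j`! * (N - r - j)`!)))%N; last by rewrite E; ring.
rewrite e4; last by lia.
by rewrite -mulnA e3 //; lia.
Qed.

Lemma comp_sum (F : fieldType) (I : Type) (l : seq I) (P : pred I) (G : I -> {poly F}) (r : {poly F}) :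
  (\sum_(i <- l | P i) G i) \Po r = \sum_(i <- l | P i) (G i \Po r).
Proof. by apply: (big_morph (fun p => p \Po r)); [move=> x y; rewrite comp_polyD | rewrite comp_poly0]. Qed.

Lemma indep (F : fieldType) (n N : nat) (b : 'I_n -> F) (rk : 'I_n -> nat) (v : 'I_n -> F)
  (hnN : (n <= N.+1)%N)
  (hC : forall j, (j <= N)%N -> ('C(N, j))%:R != 0 :> F)
  (hb : forall i, b i != 0)
  (hrk : forall i, (rk i <= N)%N)
  (hcls : forall i r, (r < count (pred1 (b i)) [seq b j | j <- enum 'I_n])%N ->
            exists i', b i' = b i /\ rk i' = r)
  (hv : forall i, \sum_(j < n) ('C(N - rk i, j))%:R * b i ^+ (N - rk i - j) * v j = 0) :
  forall j, v j = 0.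
Proof.
set s := [seq b j | j <- enum 'I_n].
pose u (j : 'I_n) := (-1) ^+ j * 'C(N, j)%:R * v j.
pose q := \sum_(j < n) u j *: 'X^(N - j).
have hjN (j : 'I_n) : (j <= N)%N by move: (ltn_ord j); lia.
have hcoef k : q`_k = \sum_(j < n) u j * (k == (N - j)%N)%:R.
  by rewrite /q coef_sum; apply: eq_bigr => j _; rewrite coefZ coefXn.
have hsq : (size q <= N.+1)%N.
  apply: (big_ind (fun p : {poly F} => size p <= N.+1)%N); first by rewrite size_poly0.
    by move=> p1 p2 h1 h2; rewrite (leq_trans (size_polyD _ _)) // geq_max h1 h2.
  move=> j _; rewrite (leq_trans (size_scale_leq _ _)) // size_polyXn; lia.
have htay i : (q \Po ('X + (- b i)%:P))`_(rk i) = 0.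
  rewrite /q comp_sum coef_sum.
  under eq_bigr => j _ do rewrite comp_polyZ comp_Xn coefZ coef_XaddC_exp.
  set c := (N - rk i)%N.
  transitivity ((-1) ^+ c * 'C(N, rk i)%:R *
    \sum_(j < n) 'C(c, j)%:R * b i ^+ (c - j) * v j); last by rewrite hv mulr0.
  rewrite big_distrr /=; apply: eq_bigr => j _.
  case: (leqP j c) => hj.
    have e1 : (N - j - rk i = c - j)%N by rewrite /c; lia.
    rewrite e1 /u.
    have hjr : (j + rk i <= N)%N by move: (hrk i); rewrite /c in hj; lia.
    have e2 := binom_swap hjr; rewrite -/c in e2.
    have e3 : (-1) ^+ j * (- b i) ^+ (c - j) = (-1) ^+ c * b i ^+ (c - j) :> F.
      by rewrite [(- b i) ^+ _]exprNn mulrA -exprD subnKC.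
    transitivity (((-1) ^+ j * (- b i) ^+ (c - j)) * ('C(N, j) * 'C(N - j, rk i))%N%:R * v j).
      by rewrite natrM; ring.
    rewrite e3 e2 natrM; ring.
  rewrite bin_small; last by move: (hrk i) (hjN j); rewrite /c in hj; lia.
  by rewrite (bin_small hj) !mul0r !mulr0 ?mul0r.
pose l := 0 :: [seq - x | x <- undup s].
pose k (x : F) := if x == 0 then (N.+1 - n)%N else count (pred1 (- x)) s.
have hs0 x : x \in s -> x != 0.
  by move=> /mapP [j _ ->]; apply: hb.
have hl : uniq l.
  rewrite /l /= map_inj_uniq ?undup_uniq ?andbT; last by apply: oppr_inj.
  apply/mapP => [[x hx /eqP]]; rewrite eq_sym oppr_eq0; apply/negP.
  by apply: hs0; rewrite -mem_undup.
have H : forall x, x \in l -> ('X - x%:P) ^+ k x %| q.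
  move=> x; rewrite inE => /orP [/eqP ->|/mapP [y hy ->]].
    rewrite /k eqxx; apply: taylor_dvd => r hr.
    rewrite addr0 comp_polyXr hcoef big1 // => j _.
    have -> : (r == (N - j)%N) = false by apply/negbTE/eqP => e; move: (ltn_ord j) hr; lia.
    by rewrite mulr0.
  move: hy; rewrite mem_undup => /mapP [i _ ->].
  rewrite /k oppr_eq0 (negbTE (hb i)) opprK; apply: taylor_dvd => r hr.
  have [i' [h1 h2]] := hcls i r hr.
  by rewrite -h1 -h2 htay.
have [hdvd hsize] := dvd_prod_roots hl H.
have hsum : (\sum_(x <- l) k x = N.+1)%N.
  rewrite /l big_cons big_map.
  have -> : \sum_(x <- undup s) k (- x) = (\sum_(x <- undup s) count (pred1 x) s * 1)%N.
    apply: eq_big_seq => x; rewrite mem_undup => hx.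
    by rewrite /k oppr_eq0 (negbTE (hs0 x hx)) opprK muln1.
  rewrite /k eqxx sum_undup_count sum1_size size_map size_enum_ord; lia.
have q0 : q = 0.
  apply/eqP/negPn/negP => hq.
  have := dvdp_leq hq hdvd; rewrite hsize hsum => /leq_trans /(_ hsq); by rewrite ltnn.
move=> j; have := hcoef (N - j)%N; rewrite q0 coef0 (bigD1 j) //= eqxx mulr1 big1 ?addr0.
  move/esym/eqP; rewrite /u !mulf_eq0 signr_eq0 (negbTE (hC _ (hjN j))) /=; by move/eqP.
move=> j' hj'; have -> : ((N - j)%N == (N - j')%N) = false.
  apply/negbTE/eqP => e; move: hj' (hjN j) (hjN j'); rewrite -val_eqE /=; lia.
by rewrite mulr0.
Qed.

End PolyPart.

Section MPPart.
Local Open Scope ring_scope.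
Lemma lagrange_sum (F : fieldType) (m : nat) (z : nat -> F)
  (hz : forall i j : 'I_m.+1, z i = z j -> i = j) (e : nat) (he : (e <= m)%N) :
  \sum_(j < m.+1) z j ^+ e / \prod_(l < m.+1 | l != j) (z j - z l) = (e == m)%:R.
Proof.
pose D (j : 'I_m.+1) := \prod_(l < m.+1 | l != j) (z j - z l).
have hD j : D j != 0.
  rewrite prodf_seq_neq0; apply/allP => l _; apply/implyP => hl.
  by rewrite subr_eq0; apply/negP => /eqP /hz /eqP; rewrite eq_sym (negbTE hl).
pose B (j : 'I_m.+1) := \prod_(l < m.+1 | l != j) ('X - (z l)%:P) : {poly F}.
have hBs j : size (B j) = m.+1.
  rewrite /B -big_filter size_prod_XsubC size_filter.
  transitivity (#|predC1 j|).+1; last by rewrite cardC1 card_ord.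
  by rewrite cardE /enum_mem size_filter.
have hBm j : (B j)`_m = 1.
  have := lead_coef_prod_XsubC (index_enum 'I_m.+1) (fun l : 'I_m.+1 => l != j) (fun l : 'I_m.+1 => z l).
  by rewrite /lead_coef -/(B j) hBs.
have hBz j (k : 'I_m.+1) : (B j).[z k] = if k == j then D k else 0.
  rewrite /B horner_prod; case: eqP => [->|/eqP hkj].
    by rewrite /D; apply: eq_bigr => l _; rewrite hornerXsubC.
  rewrite (bigD1 k) //= hornerXsubC subrr mul0r //.
pose P := \sum_(j < m.+1) (z j ^+ e / D j) *: B j.
have hP : 'X^e = P.
  apply/eqP; rewrite -subr_eq0; apply/eqP.
  set Q := _ - _.
  have hQs : (size Q <= m.+1)%N.
    rewrite /Q (leq_trans (size_polyD _ _)) // geq_max size_polyXn ltnS he /=.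
    rewrite size_polyN /P; apply: (big_ind (fun p : {poly F} => size p <= m.+1)%N) => //.
      by rewrite size_poly0.
      by move=> p q hp hq; rewrite (leq_trans (size_polyD _ _)) // geq_max hp hq.
    by move=> j _; rewrite (leq_trans (size_scale_leq _ _)) // hBs.
  apply/eqP/negPn/negP => hQ.
  have := max_poly_roots hQ (rs := [seq z (val k) | k <- enum 'I_m.+1]).
  rewrite size_map size_enum_ord ltnNge hQs /= => H; apply: (negP (negbT erefl)); apply: H.
    apply/allP => x /mapP [k _ ->]; rewrite /root /Q hornerD hornerN hornerXn.
  rewrite /P horner_sum (bigD1 k) //= hornerZ hBz eqxx big1 ?addr0.
    by rewrite mulfVK ?hD // subrr.
  by move=> j hj; rewrite hornerZ hBz eq_sym (negbTE hj) mulr0.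
  by rewrite map_inj_uniq ?enum_uniq //; move=> i j /hz.
have := congr1 (fun p : {poly F} => p`_m) hP.
rewrite coefXn eq_sym /P coef_sum => ->; apply: eq_bigr => j _.
by rewrite coefZ hBm mulr1.
Qed.

Section MPInner.
Variable F : fieldType.
Variable n : nat.
Variable a : 'I_n -> F.

Definition yP : {mpoly F[n]} := \sum_(i < n) a i *: 'X_i.

Lemma coefMXcond (p : {mpoly F[n]}) m k :
  (p * 'X_[m])@_k = if (m <= k)%MM then p@_(k - m) else 0.
Proof.
case: ifP => h.
  by rewrite -{1}(submK h) addmC mcoeffMX.
apply: memN_msupp_eq0; rewrite (perm_mem (msuppMX p m)).
by apply/negP => /mapP [m' _ e]; move: h; rewrite e lem_addr.
Qed.

Lemma coef_yPS j k : (yP ^+ j.+1)@_k =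
  \sum_(i < n) a i * (if (U_(i) <= k)%MM then (yP ^+ j)@_(k - U_(i)) else 0).
Proof.
rewrite exprSr /yP mulr_sumr raddf_sum /=; apply: eq_bigr => i _.
by rewrite -scalerAr mcoeffZ coefMXcond.
Qed.

Lemma yP_homog j k : (yP ^+ j)@_k != 0 -> mdeg k = j.
Proof.
elim: j k => [|j IH] k.
  rewrite expr0 mcoeff1; have [->|hk] := eqVneq k 0%MM; first by rewrite mdeg0.
  by rewrite /= mulr0n eqxx.
rewrite coef_yPS => /eqP h.
have [i] : exists i, (a i * (if (U_(i) <= k)%MM then (yP ^+ j)@_(k - U_(i)) else 0) != 0).
  case: (pickP (fun i => a i * (if (U_(i) <= k)%MM then (yP ^+ j)@_(k - U_(i)) else 0) != 0)) => [i hi|hall].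
    by exists i.
  by exfalso; apply: h; apply: big1 => i _; apply/eqP/negPn; rewrite hall.
case: ifP => [hU|]; last by rewrite mulr0 eqxx.
rewrite mulf_eq0 negb_or => /andP [_ /IH hd].
by rewrite -(submK hU) mdegD mdeg1 hd addn1.
Qed.

Lemma yP_coef j k : (yP ^+ j)@_k * \prod_(i < n) ((k i)`!)%:R =
  (mdeg k == j)%:R * (j`!)%:R * \prod_(i < n) a i ^+ k i.
Proof.
elim: j k => [|j IH] k.
  rewrite expr0 mcoeff1; have [->|hk] := eqVneq k 0%MM.
    rewrite mdeg0 /= !big1 ?mulr1 ?mul1r // => i _; rewrite mnm0E ?expr0 //.
  by rewrite mdeg_eq0 (negbTE hk) /= !mul0r.
rewrite coef_yPS big_distrl /=.
transitivity (\sum_(i < n) (k i)%:R * ((mdeg k == j.+1)%:R * (j`!)%:R * \prod_(l < n) a l ^+ k l)).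
  apply: eq_bigr => i _.
  case: ifP => hU; last first.
    move: hU; rewrite lep1mP => /negbFE /eqP ->; by rewrite mulr0 !mul0r.
  set k' := (k - U_(i))%MM.
  have hk'i : k i = (k' i).+1.
    rewrite /k' mnmBE mnm1E eqxx; move: hU; rewrite lep1mP; lia.
  have hk'l l : l != i -> k' l = k l.
    by move=> hl; rewrite /k' mnmBE mnm1E eq_sym (negbTE hl) subn0.
  have hmd : mdeg k = (mdeg k').+1 by rewrite /k' -{1}(submK hU) mdegD mdeg1 addn1.
  have E1 : \prod_(l < n) ((k l)`!)%:R = (k i)%:R * \prod_(l < n) ((k' l)`!)%:R :> F.
    rewrite (bigD1 i) //= [in RHS](bigD1 i) //= hk'i factS natrM mulrA; congr (_ * _).
    by apply: eq_bigr => l hl; rewrite hk'l.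
  have E2 : \prod_(l < n) a l ^+ k l = a i * \prod_(l < n) a l ^+ k' l.
    rewrite (bigD1 i) //= [in RHS](bigD1 i) //= hk'i exprS mulrA; congr (_ * _).
    by apply: eq_bigr => l hl; rewrite hk'l.
  rewrite E1 E2 hmd eqSS.
  transitivity (a i * (k i)%:R * ((yP ^+ j)@_k' * \prod_(l < n) ((k' l)`!)%:R)); first by ring.
  rewrite IH; ring.
rewrite -big_distrl /= -natr_sum -mdegE.
case: eqP => [->|_]; last by rewrite !mul0r mulr0.
by rewrite factS natrM; ring.
Qed.

Definition s2m (s : 'S_n) : 'X_{1..n} := [multinom (s i : nat) | i < n].
Definition VP : {mpoly F[n]} := \sum_(s : 'S_n) (-1) ^+ s *: 'X_[s2m s].

Lemma VP_coef (p : {mpoly F[n]}) m : (p * VP)@_m =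
  \sum_(s : 'S_n) (-1) ^+ s * (if (s2m s <= m)%MM then p@_(m - s2m s) else 0).
Proof.
rewrite /VP mulr_sumr raddf_sum /=; apply: eq_bigr => s _.
by rewrite -scalerAr mcoeffZ coefMXcond.
Qed.

Lemma mdeg_s2m s : mdeg (s2m s) = (\sum_(i < n) i)%N.
Proof.
rewrite mdegE; under eq_bigr do rewrite mnmE.
by rewrite [RHS](reindex_inj (@perm_inj _ s)).
Qed.

Lemma X_det (c : 'X_{1..n}) d (hc : mdeg c = (d + \sum_(i < n) i)%N) :
  (yP ^+ d * VP)@_c * \prod_(i < n) ((c i)`!)%:R =
  (d`!)%:R * \prod_(i < n) (i`!)%:R *
  \det (\matrix_(i, j) (('C(c i, j))%:R * a i ^+ (c i - j)) : 'M[F]_n).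
Proof.
rewrite VP_coef big_distrl /= /determinant mulr_sumr; apply: eq_bigr => s _.
under [X in _ = _ * (_ * X)]eq_bigr do rewrite mxE.
case: ifP => hs; last first.
  have [i hi] : exists i, (c i < s i)%N.
    case: (pickP (fun i => c i < s i)%N) => [i hi|hall]; first by exists i.
    exfalso; move: hs => /negbT /negP; apply; apply/mnm_lepP => i; rewrite mnmE.
    by move: (hall i) => /negbT; rewrite -leqNgt.
  rewrite [X in _ = _ * (_ * X)](bigD1 i) //= bin_small // !mul0r !mulr0 !mul0r; by rewrite ?mulr0.
set k := (c - s2m s)%MM.
have hkd : mdeg k = d.
  have := submK hs; rewrite -/k => e.
  by move: hc; rewrite -e mdegD mdeg_s2m; lia.
have hki i : k i = (c i - s i)%N by rewrite /k mnmBE mnmE.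
have hsi i : (s i <= c i)%N by move/mnm_lepP: hs => /(_ i); rewrite mnmE.
have E1 : \prod_(i < n) ((c i)`!)%:R = \prod_(i < n) ((k i)`!)%:R *
   (\prod_(i < n) ('C(c i, s i))%:R * \prod_(i < n) ((s i)`!)%:R) :> F.
  rewrite -!big_split /=; apply: eq_bigr => i _.
  by rewrite hki -(bin_fact (hsi i)) !natrM; ring.
have E2 : \prod_(i < n) ((s i)`!)%:R = \prod_(i < n) (i`!)%:R :> F.
  by rewrite [RHS](reindex_inj (@perm_inj _ s)).
have E3 : \prod_(i < n) ('C(c i, s i)%:R * a i ^+ (c i - s i)) =
   \prod_(i < n) ('C(c i, s i))%:R * \prod_(i < n) a i ^+ k i.
  by rewrite -big_split /=; apply: eq_bigr => i _; rewrite hki.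
rewrite E1 E2 E3.
have key := yP_coef d k; rewrite hkd eqxx mul1r in key.
move: key; move: ((-1) ^+ s) ((yP ^+ d)@_k) (\prod_(i < n) ((k i)`!)%:R)
  (\prod_(i < n) ('C(c i, s i))%:R) (\prod_(i < n) (i`!)%:R) ((d`!)%:R) (\prod_(i < n) a i ^+ k i).
move=> S Y K C J D A key.
transitivity (S * (Y * K) * C * J); first by ring.
rewrite key; ring.
Qed.

Lemma eval_P (g : {poly F}) (x : 'I_n -> F) :
  ((\sum_(j < size g) g`_j *: yP ^+ j) * VP).@[x] =
  g.[\sum_(i < n) a i * x i] * \det (\matrix_(i, j) x i ^+ j : 'M[F]_n).
Proof.
rewrite mevalM raddf_sum /= horner_coef; congr (_ * _).
  apply: eq_bigr => j _; rewrite mevalZ rmorphXn /= /yP raddf_sum /=.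
  by congr (_ * (_ ^+ _)); apply: eq_bigr => i _; rewrite mevalZ mevalXU.
rewrite /VP raddf_sum /= /determinant; apply: eq_bigr => s _.
rewrite mevalZ mevalX; congr (_ * _); apply: eq_bigr => i _.
by rewrite mxE mnmE.
Qed.

Lemma exists_lt (m c : 'X_{1..n}) : m != c -> (mdeg m <= mdeg c)%N -> exists i, (m i < c i)%N.
Proof.
move=> hmc hd.
case: (pickP (fun i => m i < c i)%N) => [i hi|hall]; first by exists i.
exfalso; have hcm : (c <= m)%MM.
  by apply/mnm_lepP => i; move: (hall i) => /negbT; rewrite -leqNgt.
have e := submK hcm.
have : mdeg (m - c) = 0%N by have := mdegD (m - c) c; rewrite e; lia.
move/eqP; rewrite mdeg_eq0 => /eqP h0.
by move: hmc; rewrite -e h0 add0m eqxx.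
Qed.

Section Grid.
Variables (K : nat) (z : nat -> F) (c : 'X_{1..n}).
Hypothesis hcK : forall i, (c i < K)%N.
Hypothesis hz : forall i j, (i < K)%N -> (j < K)%N -> z i = z j -> i = j.

Definition w (i : 'I_n) (j : nat) : F :=
  if (j <= c i)%N then (\prod_(l < (c i).+1 | (l : nat) != j) (z j - z l))^-1 else 0.
Definition L (p : {mpoly F[n]}) : F :=
  \sum_(t : {ffun 'I_n -> 'I_K}) p.@[fun i => z (t i)] * \prod_(i < n) w i (t i).
Definition Lam (i : 'I_n) (e : nat) : F := \sum_(j < K) z j ^+ e * w i j.

Lemma L_mono (m : 'X_{1..n}) :
  \sum_(t : {ffun 'I_n -> 'I_K}) (\prod_(i < n) z (t i) ^+ m i) * \prod_(i < n) w i (t i) =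
  \prod_(i < n) Lam i (m i).
Proof.
rewrite /Lam bigA_distr_bigA; apply: eq_bigr => t _.
by rewrite -big_split.
Qed.

Lemma Lam_val i e : (e <= c i)%N -> Lam i e = (e == c i)%:R.
Proof.
move=> he; rewrite /Lam.
pose G (j : nat) := z j ^+ e * (\prod_(l < (c i).+1 | (l : nat) != j) (z j - z l))^-1.
transitivity (\sum_(j < K | (j < (c i).+1)%N) G j).
  rewrite [RHS]big_mkcond /=; apply: eq_bigr => j _; rewrite /w /G ltnS.
  by case: ifP => //; rewrite mulr0.
rewrite -(big_ord_widen _ G (hcK i)) -(lagrange_sum (z := z)) //.
move=> i' j' ee; move: (ltn_ord i') (ltn_ord j') (hcK i) => h1 h2 h3.
by apply: val_inj; apply: (hz _ _ ee); lia.
Qed.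

Lemma L_coef (p : {mpoly F[n]}) :
  (forall m, p@_m != 0 -> (mdeg m <= mdeg c)%N) -> L p = p@_c.
Proof.
move=> hp.
transitivity (\sum_(m <- msupp p) p@_m * \prod_(i < n) Lam i (m i)).
  rewrite /L; under eq_bigr do rewrite mevalE big_distrl /=.
  rewrite exchange_big /=; apply: eq_bigr => m _.
  by rewrite -L_mono big_distrr /=; apply: eq_bigr => t _; rewrite mulrA.
transitivity (\sum_(m <- msupp p) p@_m * (m == c)%:R).
  apply: eq_big_seq => m; rewrite mcoeff_msupp => hm.
  have [->|hmc] := eqVneq m c.
    by congr (_ * _); rewrite big1 // => i _; rewrite Lam_val // eqxx.
  have [i hi] := exists_lt hmc (hp m hm).
  by rewrite (bigD1 i) //= Lam_val ?(ltnW hi) // (ltn_eqF hi) mul0r mulr0 ?mulr0n.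
rewrite [in RHS](mpolyE p) raddf_sum /=; apply: eq_bigr => m _.
by rewrite mcoeffZ mcoeffX.
Qed.

End Grid.

End MPInner.

End MPPart.

Lemma aux_Nd n K pp : 0 < n -> n <= K -> (pp = 0 \/ n - 1 <= pp) -> 1 <= n * (K - n) + pp -> K.-1 <= n * (K - n) + pp.
Proof.
move=> h1 h2 h3 h4.
have e : n * (K - n) = (K - n) + (n - 1) * (K - n) by rewrite -{1}(subnK h1) mulnDl mul1n addnC.
case: h3 => h3.
  have : 1 <= K - n by move: h4; rewrite h3 addn0 => h4; apply: contraLR h4; rewrite -!ltnNge ltnS leqn0 => /eqP ->; rewrite muln0.
  move=> hx. have : n - 1 <= (n - 1) * (K - n) by rewrite leq_pmulr.
  lia.
have : K - n <= n * (K - n) by rewrite leq_pmull.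
lia.
Qed.

Section Helpers.
Local Open Scope ring_scope.
Lemma tri_sum n : (2 * \sum_(i < n) i + n = n * n)%N.
Proof.
elim: n => [|n IH]; first by rewrite big_ord0.
have e : (\sum_(i < n.+1) (i : nat) = \sum_(i < n) (i : nat) + n)%N by rewrite big_ord_recr.
rewrite e; nia.
Qed.

Lemma fact_neq0 (F : fieldType) (d : nat) (hnat : forall m, (0 < m)%N -> (m <= d)%N -> (m%:R : F) != 0)
  m : (m <= d)%N -> ((m`!)%:R : F) != 0.
Proof.
elim: m => [|m IH] h; first by rewrite fact0 oner_eq0.
by rewrite factS natrM mulf_neq0 //; [apply: hnat | apply: IH]; lia.
Qed.

End Helpers.

Unset Implicit Arguments.
Unset Strict Implicit.

Theorem mainTheorem2 (F : fieldType) (A : seq F) (n : nat) (a : 'I_n -> F)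
  (hA : uniq A) (hn : n <= size A) (ha : forall i, a i != 0%R)
  (hchar : ([pchar F]%R =i pred0) \/
           (exists p : nat, p \in [pchar F]%R /\ (dparam A a < p)%N)) :
  exists s : seq F, uniq s /\ (dparam A a).+1 <= size s /\
    (forall y, y \in s -> restricted_sum A a y).
Proof.
set d := dparam A a.
set K := size A.
pose z := fun j : nat => nth 0%R A j.
have hz : forall i j, (i < K)%N -> (j < K)%N -> z i = z j -> i = j.
  by move=> i j hi hj; rewrite /z => /eqP; rewrite nth_uniq // => /eqP.
pose sums := undup [seq (\sum_(i < n) a i * z (t i))%R |
   t : {ffun 'I_n -> 'I_K} <- enum [pred t : {ffun 'I_n -> 'I_K} | injectiveb t]].
have hmem : forall y, y \in sums -> restricted_sum A a y.
  move=> y; rewrite mem_undup => /mapP [t]; rewrite mem_enum /= => /injectiveP ht ->.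
  exists (fun i => z (t i)); split; first by move=> i; apply: mem_nth.
  split => // i j /hz h; apply: ht; apply: val_inj; apply: h; apply: ltn_ord.
exists sums; split; first exact: undup_uniq.
split; last exact: hmem.
rewrite leqNgt; apply/negP => hlt.
have hnK : (n <= K)%N by [].
pose t0 := [ffun i : 'I_n => widen_ord hnK i].
have ht0 : injectiveb t0.
  by apply/injectiveP => i j; rewrite !ffunE => /(congr1 val) /= /val_inj.
have hsums0 : (0 < size sums)%N.
  case E: sums => [|//]; have : (\sum_(i < n) a i * z (t0 i))%R \in sums.
    by rewrite mem_undup; apply: map_f; rewrite mem_enum.
  by rewrite E.
have hsd : size sums <= d by rewrite -ltnS.
have hd1 : 1 <= d := leq_trans hsums0 hsd.
set s := [seq a i | i <- enum 'I_n].
have hss : size s = n by rewrite size_map size_enum_ord.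
have hd : d = n * (K - n) + pair_prod_sum (mults s) by [].
have hpr : 2 * pair_prod_sum (mults s) + 2 * (\sum_(i < n) rank 0%R s i) + n = n * n.
  by have := pp_rank 0%R s; rewrite hss -mulnn.
have hge : pair_prod_sum (mults s) = 0 \/ n - 1 <= pair_prod_sum (mults s).
  by have := pp_ge s; rewrite hss.
pose rk (i : 'I_n) := rank 0%R s i.
set R := \sum_(i < n) rank 0%R s i in hpr.
have hn1 : 0 < n.
  case: (posnP n) => // hn0; exfalso; move: hd1; rewrite hd hn0 mul0n add0n.
  move: hpr; rewrite hn0; lia.
pose N := K.-1.
have hKN : K = N.+1 by rewrite /N; lia.
have hNd : N <= d by rewrite /N hd; apply: aux_Nd => //; rewrite -hd.
have hnat : forall m, 0 < m -> m <= d -> (m%:R : F)%R != 0%R.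
  move=> m hm hmd; case: hchar => [h0 | [p [hp hdp]]].
    by move/pcharf0P: h0 => ->; lia.
  rewrite -(dvdn_pcharf hp); apply/negP => /(dvdn_leq hm); lia.
have hfact := fact_neq0 hnat.
have hC : forall j, j <= N -> ('C(N, j)%:R : F)%R != 0%R.
  move=> j hj; apply/negP => /eqP h; have := hfact N hNd.
  by rewrite -(bin_fact hj) !natrM h !mul0r eqxx.
have hrk : forall i, rk i <= N.
  move=> i; have := rank_lt 0%R (_ : (i : nat) < size s); rewrite hss => /(_ (ltn_ord i)).
  rewrite /rk; lia.
pose c : 'X_{1..n} := [multinom (N - rk i)%N | i < n].
have hci : forall i, c i = (N - rk i)%N by move=> i; rewrite mnmE.
have hcK : forall i, c i < K by move=> i; rewrite hci; lia.
have hmdc : mdeg c = d + \sum_(i < n) i.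
  have h1 : (mdeg c + R = n * N)%N.
    rewrite mdegE /R -big_split /=.
    rewrite (eq_bigr (fun=> N)); first by rewrite sum_nat_const card_ord.
    by move=> i _; rewrite hci subnK // hrk.
  have h2 := tri_sum n.
  have h3 : n * K = n * (K - n) + n * n by rewrite -mulnDr subnK.
  have h4 : n * K = n * N + n by rewrite hKN mulnS addnC.
  move: h1 h2 hpr h3 h4; rewrite hd /R; lia.
pose g : {poly F} := (\prod_(y <- sums) ('X - y%:P) * 'X^(d - size sums))%R.
have hgm : g \is monic by rewrite monicMl ?monic_prod_XsubC // monicXn.
have hgs : size g = d.+1.
  rewrite /g size_monicM ?monic_prod_XsubC ?monic_neq0 ?monicXn //.
  by rewrite size_prod_XsubC size_polyXn; lia.
have hgd : (g`_d = 1)%R by move/monicP: hgm; rewrite /lead_coef hgs.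
pose P := ((\sum_(j < size g) g`_j *: yP a ^+ j) * VP F n)%R.
have hPm : forall m, (P@_m = \sum_(sg : 'S_n) (-1) ^+ sg *
     (if (s2m sg <= m)%MM then \sum_(j < size g) g`_j * (yP a ^+ j)@_(m - s2m sg) else 0))%R.
  move=> m; rewrite /P VP_coef; apply: eq_bigr => sg _; case: ifP => // _.
  by rewrite raddf_sum /=; congr (_ * _)%R; apply: eq_bigr => j _; rewrite mcoeffZ.
have hsupp : forall m, (P@_m != 0)%R -> mdeg m <= mdeg c.
  move=> m; rewrite hPm => hm.
  have [sg hsg] : exists sg : 'S_n, ((-1) ^+ sg *
     (if (s2m sg <= m)%MM then \sum_(j < size g) g`_j * (yP a ^+ j)@_(m - s2m sg) else 0) != 0)%R.
    case: (pickP (fun sg : 'S_n => ((-1) ^+ sg *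
     (if (s2m sg <= m)%MM then \sum_(j < size g) g`_j * (yP a ^+ j)@_(m - s2m sg) else 0) != 0)%R)) => [sg h|hall].
      by exists sg.
    by move: hm; rewrite big1 ?eqxx // => sg _; apply/eqP/negPn; rewrite hall.
  move: hsg; case: ifP => hle; last by rewrite GRing.mulr0 eqxx.
  rewrite GRing.mulf_eq0 negb_or => /andP [_ hs].
  have [j hj] : exists j : 'I_(size g), (g`_j * (yP a ^+ j)@_(m - s2m sg) != 0)%R.
    case: (pickP (fun j : 'I_(size g) => (g`_j * (yP a ^+ j)@_(m - s2m sg) != 0)%R)) => [j h|hall].
      by exists j.
    by move: hs; rewrite big1 ?eqxx // => j _; apply/eqP/negPn; rewrite hall.
  move: hj; rewrite GRing.mulf_eq0 negb_or => /andP [_ /yP_homog hdeg].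
  rewrite hmdc -(submK hle) mdegD mdeg_s2m hdeg.
  have hj := ltn_ord j; have hjd : (j : nat) <= d by rewrite -ltnS -hgs. 
  lia.
have hPc : (P@_c = (yP a ^+ d * VP F n)@_c)%R.
  rewrite hPm VP_coef; apply: eq_bigr => sg _; case: ifP => // hle.
  congr (_ * _)%R.
  have hdeg : mdeg (c - s2m sg) = d.
    by have := mdegD (c - s2m sg) (s2m sg); rewrite submK // mdeg_s2m hmdc; lia.
  have hdg : d < size g by rewrite hgs.
  rewrite (bigD1 (Ordinal hdg)) //= hgd GRing.mul1r big1 ?GRing.addr0 // => j hj.
  case: (eqVneq ((yP a ^+ j)@_(c - s2m sg))%R 0%R) => [->|/yP_homog h]; first by rewrite GRing.mulr0.
  by exfalso; move: hj; rewrite -val_eqE /= -h hdeg eqxx.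
have hL0 : L K z c P = 0%R.
  apply: big1 => t _; rewrite eval_P.
  case: (boolP (injectiveb t)) => ht.
    have hy : (\sum_(i < n) a i * z (t i))%R \in sums.
      by rewrite mem_undup; apply: map_f; rewrite mem_enum.
    by rewrite /g hornerM horner_prod (big_rem _ hy) /= hornerXsubC GRing.subrr !GRing.mul0r.
  move/injectivePn: ht => [i [j hij htij]].
  rewrite (determinant_alternate hij) ?GRing.mulr0 ?GRing.mul0r // => k.
  by rewrite !mxE htij.
have hX0 : ((yP a ^+ d * VP F n)@_c = 0)%R by rewrite -hPc -(L_coef hcK hz hsupp).
have hdet := X_det a hmdc; rewrite hX0 GRing.mul0r in hdet.
pose B : 'M[F]_n := (\matrix_(i, j) ('C(c i, j)%:R * a i ^+ (c i - j)))%R.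
have hB0 : (\det B == 0)%R.
  move/esym/eqP: hdet; rewrite !GRing.mulf_eq0 (negbTE (hfact d (leqnn d))) /=.
  rewrite GRing.prodf_seq_eq0 /= => /orP [/hasP [i _ /=]|//].
  by rewrite (negbTE (hfact _ _)) //; move: (ltn_ord i) hKN hn; lia.
have hBT : (\det B^T == 0)%R by rewrite det_tr.
move/det0P: hBT => [v hv0 hvB].
have hnN : n <= N.+1 by rewrite -hKN.
have hcls : forall (i : 'I_n) (r : nat), r < count_mem (a i) [seq a j | j <- enum 'I_n] ->
    exists i' : 'I_n, a i' = a i /\ rk i' = r.
  move=> i r hr; have [i0 [h1 h2 h3]] := rank_exists 0%R hr.
  rewrite -/s hss in h1.
  exists (Ordinal h1); split => //.
  rewrite -h2 /s (nth_map i) ?size_enum_ord //; congr (a _); apply: val_inj => /=; by rewrite nth_enum_ord.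
have hv : forall i : 'I_n, (\sum_(j < n) 'C(N - rk i, j)%:R * a i ^+ (N - rk i - j) * v ord0 j)%R = 0%R.
  move=> i; have := congr1 (fun M : 'M[F]_(1, n) => M ord0 i) hvB; rewrite !mxE => H.
  transitivity (\sum_j v ord0 j * B^T j i)%R; last exact: H.
  by apply: eq_bigr => j _; rewrite !mxE hci GRing.mulrC.
have := indep hnN hC ha hrk hcls hv.
move=> hvz; apply: (negP hv0); apply/eqP/rowP => j; rewrite !mxE; exact: hvz.
Qed.
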